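(* Let $h^*:\omega\to\omega\setminus\{0\}$ and $H^*(n)=2^{h^*(n)}$. Let $\mathcal H\subseteq\omega^\omega$ be a dominating family and let $\bar\nu=\langle\nu^h:h\in\mathcal H\rangle$ have index $\mathcal H$. Let $\dot g^*$ be the name of the generic function added by $PT_{H^*}$. Then $\Vdash_{PT_{H^*}}$ ''there is $h\in\mathcal H$ with $\bigcup_{k\in\omega}[\nu^h(k)]\subseteq\bigcup_{n\in\omega}[\dot g^*(n)]$''.
   Context: $2^k$ is the set of binary sequences of length $k$ and $[\eta]=\{f\in2^\omega:\eta\subseteq f\}$. $\mathcal H\subseteq\omega^\omega$ is dominating if every $f\in\omega^\omega$ satisfies $f(n)<h(n)$ for all $n$ for some $h\in\mathcal H$. $\bar\nu$ has index $\mathcal H$ if each $\nu^h$ has domain $\omega$ and $\nu^h(n)\in2^{h(n)}$. For $H$ with domain $\omega$ and each $H(n)$ finite with at least two elements, $PT_H$ is the set of all $p$ such that (A) $p$ is a nonempty set of finite sequences closed under initial segments; (B) $\eta(l)\in H(l)$ for $\eta\in p$, $l<|\eta|$; (C) for $\eta\in p$, $\{i:\eta^\frown i\in p\}$ is a singleton or equals $H(|\eta|)$; (D) every $\eta\in p$ has an extension $\nu\in p$ with $\{i:\nu^\frown i\in p\}=H(|\nu|)$; $q$ is stronger than $p$ iff $q\subseteq p$. The generic function $g$ added by $PT_H$ is the function with domain $\omega$ such that $g\restriction n\in p$ for all $n$ and all $p$ in the generic filter. *)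

(* Defs.v *)
From mathcomp Require Import all_boot.
Set Implicit Arguments. Unset Strict Implicit. Unset Printing Implicit Defensive.

(* A binary sequence eta (element of 2^k, k = size eta) and [eta] as a
   predicate on 2^omega : x \in [eta] iff eta is an initial segment of x. *)
Definition in_cyl (eta : seq bool) (x : nat -> bool) : Prop :=
  forall i, i < size eta -> x i = nth false eta i.

(* H^*(n) = 2^{h^*(n)} : binary sequences of length h^*(n). *)
Definition Hstar (hs : nat -> nat) (n : nat) (s : seq bool) : Prop :=
  size s = hs n.

Definition dominating (Hf : (nat -> nat) -> Prop) : Prop :=
  forall f : nat -> nat, exists h, Hf h /\ forall n, f n < h n.

Definition has_index (Hf : (nat -> nat) -> Prop)
  (nu : (nat -> nat) -> nat -> seq bool) : Prop :=
  forall h, Hf h -> forall n, size (nu h n) = h n.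

Definition PT (H : nat -> seq bool -> Prop) (p : seq (seq bool) -> Prop) : Prop :=
  (exists eta, p eta) /\
  (forall eta n, p eta -> p (take n eta)) /\
  (forall eta, p eta -> forall l, l < size eta -> H l (nth [::] eta l)) /\
  (forall eta, p eta ->
     (exists i, forall j, p (rcons eta j) <-> j = i) \/
     (forall j, p (rcons eta j) <-> H (size eta) j)) /\
  (forall eta, p eta -> exists nu, prefix eta nu /\ p nu /\
     forall j, p (rcons nu j) <-> H (size nu) j).

Definition PT_le (H : nat -> seq bool -> Prop) (q p : seq (seq bool) -> Prop) : Prop :=
  PT H q /\ forall eta, q eta -> p eta.

(* branches of a tree: the possible values of the generic function g *)
Definition body (p : seq (seq bool) -> Prop) (g : nat -> seq bool) : Prop :=
  forall n, p (mkseq g n).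

(* Forcing relation for a statement "g \in O" with O an OPEN set of values of
   the generic g (open in the product topology): p forces it iff the set of
   conditions s all of whose branches lie in O is dense below p. *)
Definition forces_open (H : nat -> seq bool -> Prop) (p : seq (seq bool) -> Prop)
  (O : (nat -> seq bool) -> Prop) : Prop :=
  forall r, PT_le H r p -> exists s, PT_le H s r /\ forall g, body s g -> O g.

(* The statement  [nu^h(k)] \subseteq \bigcup_n [g(n)]  (open in g). *)
Definition cyl_covered (eta : seq bool) (g : nat -> seq bool) : Prop :=
  forall x : nat -> bool, in_cyl eta x -> exists n, in_cyl (g n) x.

(* Main.v *)
Require Import Defs.
From mathcomp Require Import all_boot zify.
From Stdlib Require Import ClassicalEpsilon.
Set Implicit Arguments. Unset Strict Implicit. Unset Printing Implicit Defensive.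

Lemma fin_bound (L : nat) (Q : seq bool -> nat -> Prop) :
  (forall j N N', N <= N' -> Q j N -> Q j N') ->
  (forall j, size j = L -> exists N, Q j N) ->
  exists N, forall j, size j = L -> Q j N.
Proof.
elim: L Q => [|L IH] Q mono exQ.
  have [N HN] := exQ [::] erefl.
  by exists N => -[|//].
have [N0 H0] := IH (fun j N => Q (false :: j) N) (fun j N N' hle => mono _ _ _ hle)
   (fun j e => exQ (false :: j) (congr1 S e)).
have [N1 H1] := IH (fun j N => Q (true :: j) N) (fun j N N' hle => mono _ _ _ hle)
   (fun j e => exQ (true :: j) (congr1 S e)).
exists (maxn N0 N1) => -[//|[] j] /= [e].
  by apply: mono (H1 _ e); rewrite leq_maxr.
by apply: mono (H0 _ e); rewrite leq_maxl.
Qed.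

Lemma take_mkseq (g : nat -> seq bool) m n : m <= n -> take m (mkseq g n) = mkseq g m.
Proof. by move=> le; rewrite /mkseq -map_take take_iota (minn_idPl le). Qed.

Section Tree.
Variable hs : nat -> nat.
Variable p : seq (seq bool) -> Prop.
Hypothesis Pp : PT (Hstar hs) p.

Definition splitting (e : seq (seq bool)) :=
  forall j, p (rcons e j) <-> Hstar hs (size e) j.
Definition spl e : bool := if excluded_middle_informative (splitting e) then true else false.
Lemma splP e : spl e <-> splitting e.
Proof. by rewrite /spl; case: excluded_middle_informative. Qed.

Definition C (e : seq (seq bool)) n := count (fun i => spl (take i e)) (iota 0 n).
Definition c e := C e (size e).

Lemma c_take e n : n <= size e -> c (take n e) = C e n.
Proof.
move=> le; rewrite /c /C size_takel //; apply: eq_in_count => i.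
by rewrite mem_iota add0n => /andP[_ lt]; rewrite take_takel // ltnW.
Qed.

Lemma CS e n : C e n.+1 = C e n + spl (take n e).
Proof. by rewrite /C -addn1 iotaD count_cat /= add0n addn0. Qed.

Lemma c_takeS e n : n < size e -> c (take n.+1 e) = c (take n e) + spl (take n e).
Proof. by move=> lt; rewrite !c_take // ?CS // ltnW. Qed.

Lemma c_rcons e j : c (rcons e j) = c e + spl e.
Proof.
have H1 : take (size e) (rcons e j) = e by rewrite -cats1 take_size_cat.
have := c_takeS (e := rcons e j) (n := size e); rewrite size_rcons ltnSn H1 take_oversize ?size_rcons //.
by apply.
Qed.

Lemma C_mono e m n : m <= n -> C e m <= C e n.
Proof.
move/subnKC <-; elim: (n - m) => [|d IH]; first by rewrite addn0.
by rewrite addnS CS; apply: leq_trans IH (leq_addr _ _).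
Qed.

Lemma p_nil : p [::].
Proof. case: Pp => [[e pe] [pt _]]; by have := pt e 0 pe; rewrite take0. Qed.

Lemma walk e : p e -> exists v, [/\ p v, take (size e) v = e, size e <= size v,
  splitting v & forall i, size e <= i < size v -> ~ splitting (take i v)].
Proof.
move=> pe; case: Pp => [_ [pt [_ [_ pD]]]].
have [v' [pre [pv' sv']]] := pD e pe.
move: pre; rewrite prefixE => /eqP tv'.
have sz : size e <= size v' by rewrite -tv' size_take; case: ifP => // /ltnW.
pose P i := (size e <= i <= size v') && spl (take i v').
have exP : exists i, P i.
  by exists (size v'); rewrite /P leqnn sz take_size; apply/splP.
case: (ex_minnP exP) => m /andP[/andP[l1 l2] sm] mmin.
exists (take m v'); rewrite size_takel //; split.
- exact: pt.
- by rewrite take_takel.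
- done.
- exact/splP.
- move=> i /andP[i1 i2] /splP si.
  have : P i by rewrite /P i1 (ltnW (leq_trans i2 l2)) -(take_takel _ (ltnW i2)).
  by move/mmin; rewrite leqNgt i2.
Qed.

Lemma path_unique e v0 v : p v0 -> take (size e) v0 = e ->
  (forall i, size e <= i < size v0 -> ~ splitting (take i v0)) ->
  p v -> take (size e) v = e -> size v0 <= size v -> take (size v0) v = v0.
Proof.
move=> pv0 tv0 ns pv tv sz.
case: Pp => [_ [pt [_ [pC _]]]].
have sz0 : size e <= size v0 by rewrite -tv0 size_take; case: ifP => // /ltnW.
suff: forall d, size e + d <= size v0 -> take (size e + d) v = take (size e + d) v0.
  by move/(_ (size v0 - size e)); rewrite subnKC // take_size; apply.
elim=> [|d IH] le; first by rewrite addn0 tv tv0.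
have l1 : size e + d < size v0 by rewrite -addnS.
have l2 : size e + d < size v by apply: leq_trans l1 sz.
rewrite addnS (take_nth [::] l1) (take_nth [::] l2) IH ?(ltnW l1) //.
have ns' := ns (size e + d); rewrite leq_addr l1 in ns'.
have [[i0 Hi]|Hs] := pC _ (pt v0 (size e + d) pv0); last first.
  by exfalso; apply: ns' => // j; rewrite Hs size_take.
have e1 := pt v0 (size e + d).+1 pv0; rewrite (take_nth [::] l1) in e1.
have e2 := pt v (size e + d).+1 pv; rewrite (take_nth [::] l2) IH ?(ltnW l1) // in e2.
congr rcons.
by rewrite (proj1 (Hi _) e1) (proj1 (Hi _) e2).
Qed.

Lemma c_nil : c [::] = 0.
Proof. by []. Qed.

Lemma bound m e : p e -> exists N, forall v, p v -> take (size e) v = e ->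
  N <= size v -> c e + m <= c v.
Proof.
elim: m e => [|m IH] e pe.
  exists (size e) => v pv tv sz.
  by rewrite addn0 -{1}tv c_take // C_mono.
have [v0 [pv0 tv0 sz0 spv0 ns]] := walk pe.
have cv0 : c v0 = c e.
  suff: forall d, size e + d <= size v0 -> C v0 (size e + d) = C v0 (size e).
    move/(_ (size v0 - size e)); rewrite subnKC // => H.
    by rewrite /c H // -c_take // tv0.
  elim=> [|d IHd] le; first by rewrite addn0.
  rewrite addnS CS IHd; last by rewrite addnS in le; apply: ltnW.
  have : spl (take (size e + d) v0) = false.
    by apply/negbTE/negP => /splP; apply: ns; rewrite leq_addr -addnS.
  by move=> ->; rewrite addn0.
pose Q j N := size j = hs (size v0) -> forall v, p v -> take (size (rcons v0 j)) v = rcons v0 j ->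
  N <= size v -> c (rcons v0 j) + m <= c v.
have [N HN] : exists N, forall j, size j = hs (size v0) -> Q j N.
  apply: fin_bound.
    by move=> j N N' hle HQ sj v pv tv szv; apply: HQ => //; apply: leq_trans hle szv.
  move=> j sj.
  have pj : p (rcons v0 j) by apply/spv0.
  have [N HN] := IH _ pj; exists N => _; exact: HN.
exists (maxn (size v0).+1 N).
move=> v pv tv; rewrite geq_max => /andP[l1 l2].
have tv1 : take (size v0) v = v0 by apply: (path_unique (e := e)) => //; apply: ltnW.
case: Pp => [_ [_ [pB _]]].
have sj := pB v pv (size v0) l1.
have := HN _ sj sj v pv.
have tj : take (size v0).+1 v = rcons v0 (nth [::] v (size v0)) by rewrite (take_nth [::] l1) tv1.
rewrite size_rcons => /(_ tj l2).
by rewrite c_rcons cv0 (_ : spl v0 = true) ?addn1 ?addnS //; apply/splP.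
Qed.

Section Q.
Variable w : nat -> seq bool.
Hypothesis wok : forall z, p z -> hs (size z) <= size (w (c z)./2).

Definition code z := take (hs (size z)) (w (c z)./2).
Lemma code_ok z : p z -> Hstar hs (size z) (code z).
Proof. by move=> pz; rewrite /Hstar /code size_takel // wok. Qed.

Definition q e := p e /\ forall i, i < size e -> spl (take i e) -> odd (c (take i e)) ->
   nth [::] e i = code (take i e).

Lemma q_take e n : q e -> q (take n e).
Proof.
case: Pp => [_ [pt _]] [pe qe]; split; first exact: pt.
move=> i; rewrite size_take_min leq_min => /andP[i1 i2].
by rewrite take_takel ?(ltnW i1) // nth_take //; apply: qe.
Qed.

Lemma q_rcons e j : q (rcons e j) <-> q e /\ p (rcons e j) /\ (spl e -> odd (c e) -> j = code e).
Proof.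
have te : take (size e) (rcons e j) = e by rewrite -cats1 take_size_cat.
split.
  move=> qr; split; first by rewrite -te; apply: q_take.
  split; first by case: qr.
  move=> s o; case: qr => _ /(_ (size e)); rewrite size_rcons te nth_rcons ltnn eqxx.
  by apply.
move=> [[pe qe] [pr cj]]; split => // i; rewrite size_rcons ltnS leq_eqVlt => /orP[/eqP ->|lt].
  by rewrite te nth_rcons ltnn eqxx.
have ti : take i (rcons e j) = take i e by rewrite -cats1 takel_cat // ltnW.
by rewrite ti nth_rcons lt; apply: qe.
Qed.

Lemma qwalk e : q e -> exists v, [/\ q v, prefix e v, splitting v & c v = c e].
Proof.
move=> [pe qe]; have [v [pv tv sz spv ns]] := walk pe.
exists v; split => //.
- split => // i lt.
  case: (ltnP i (size e)) => [ie|ei].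
    have ti : take i v = take i e by rewrite -tv take_takel // ltnW.
    have ni : nth [::] v i = nth [::] e i by rewrite -tv nth_take.
    by rewrite ti ni; apply: qe.
  by move=> /splP H; exfalso; apply: (ns i) H; rewrite ei lt.
- by rewrite prefixE tv.
- suff: forall d, size e + d <= size v -> C v (size e + d) = C v (size e).
    move/(_ (size v - size e)); rewrite subnKC // => H.
    by rewrite /c H // -c_take // tv.
  elim=> [|d IHd] le; first by rewrite addn0.
  rewrite addnS CS IHd; last by rewrite addnS in le; apply: ltnW.
  have : spl (take (size e + d) v) = false.
    by apply/negbTE/negP => /splP; apply: ns; rewrite leq_addr -addnS.
  by move=> ->; rewrite addn0.
Qed.

Lemma PTq : PT (Hstar hs) q.
Proof.
case: Pp => [_ [pt [pB [pC _]]]].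
split; first by exists [::]; split => //; exact: p_nil.
split; first by move=> e n; apply: q_take.
split; first by move=> e [pe _]; apply: pB.
have qsplit : forall v, q v -> splitting v -> ~~ odd (c v) ->
    forall j, q (rcons v j) <-> Hstar hs (size v) j.
  move=> v qv spv ev j; rewrite q_rcons; split.
    by move=> [_ [pr _]]; apply/spv.
  move=> hj; split=> //; split; first by apply/spv.
  by move=> _ o; rewrite o in ev.
split.
  move=> e qe; case: (boolP (spl e)) => [/splP se|nse].
    case: (boolP (odd (c e))) => [o|ev]; last by right; apply: qsplit.
    left; exists (code e) => j; rewrite q_rcons; split.
      by move=> [_ [_ H]]; apply: H => //; apply/splP.
    move=> ->; split => //; split=> //.
    by apply/se; apply: code_ok; case: qe.
  case: qe => [pe qe'].
  have [[i0 Hi]|Hs] := pC _ pe; last by exfalso; move/negP: nse; apply; apply/splP.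
  left; exists i0 => j; rewrite q_rcons; split; first by move=> [_ [pr _]]; apply/Hi.
  move=> ->; split => //; split; first by apply/Hi.
  by move=> s; rewrite s in nse.
move=> e qe; have [v [qv pev spv cv]] := qwalk qe.
case: (boolP (odd (c v))) => [o|ev]; last first.
  by exists v; split => //; split => //; apply: qsplit.
have qv' : q (rcons v (code v)).
  rewrite q_rcons; split => //; split => //; apply/spv; apply: code_ok; by case: qv.
have [v' [qv'' pev' spv' cv']] := qwalk qv'.
exists v'; split; first by apply: prefix_trans pev'; apply: prefix_trans pev (prefix_rcons _ _).
split => //; apply: qsplit => //.
by rewrite cv' c_rcons (_ : spl v = true) ?addn1 /= ?o //; apply/splP.
Qed.

Lemma q_branch g k : (forall n, q (mkseq g n)) -> cyl_covered (w k) g.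
Proof.
move=> qg.
have [N HN] := bound (k.*2.+2) p_nil.
pose P n := k.*2.+2 <= c (mkseq g n).
have exP : exists n, P n.
  exists N; rewrite /P; have := HN (mkseq g N); rewrite take0 size_mkseq; apply => //.
  by case: (qg N).
case: (ex_minnP exP) => n0 Pn0 mn.
case: n0 Pn0 mn => [|n1] Pn1 mn; first by rewrite /P /= in Pn1.
have nP : c (mkseq g n1) < k.*2.+2 by rewrite ltnNge; apply/negP => /mn; rewrite ltnn.
have ct : c (mkseq g n1.+1) = c (mkseq g n1) + spl (mkseq g n1).
  have := c_takeS (e := mkseq g n1.+1) (n := n1); rewrite size_mkseq ltnSn (take_oversize (n := n1.+1)) ?size_mkseq // (take_mkseq g (leqnSn n1)).
  by apply.
move: Pn1; rewrite /P ct.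
case sp: (spl (mkseq g n1)); last by rewrite addn0 leqNgt nP.
rewrite addn1 ltnS => le.
have ck : c (mkseq g n1) = k.*2.+1 by apply/eqP; rewrite eqn_leq le -ltnS nP.
have [pg qg'] := qg n1.+1.
have := qg' n1; rewrite size_mkseq ltnSn take_mkseq // sp ck /= odd_double /= nth_mkseq //.
move=> /(_ erefl erefl) gn.
have hk : hs n1 <= size (w k).
  have := wok (proj1 (qg n1)); rewrite size_mkseq ck.
  by rewrite -addn1 addnC (half_bit_double k true).
have gk : g n1 = take (hs n1) (w k).
  have sm : size (mkseq g n1) = n1 by rewrite size_mkseq.
  rewrite (gn isT) /code; transitivity (take (hs n1) (w ((k.*2.+1)./2))); first by rewrite sm ck.
  by rewrite -addn1 addnC (half_bit_double k true).
move=> x xin; exists n1 => i; rewrite gk size_takel // => lt.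
by rewrite nth_take // xin // (leq_trans lt hk).
Qed.
End Q.
End Tree.

Theorem fact2p32 (hs : nat -> nat) (hs_pos : forall n, 0 < hs n)
  (Hf : (nat -> nat) -> Prop) (Hdom : dominating Hf)
  (nu : (nat -> nat) -> nat -> seq bool) (Hnu : has_index Hf nu) :
  forall p, PT (Hstar hs) p ->
    exists q h, PT_le (Hstar hs) q p /\ Hf h /\
      forall k, forces_open (Hstar hs) q (cyl_covered (nu h k)).
Proof.
move=> p Pp.
have Hb : forall m, exists N, forall v, p v -> N <= size v -> m <= c hs p v.
  move=> m; have [N HN] := bound Pp m (p_nil Pp); exists N => v pv sz.
  by have := HN v pv (take0 v) sz; rewrite c_nil.
pose Nb m := proj1_sig (constructive_indefinite_description _ (Hb m)).
have HNb : forall m v, p v -> Nb m <= size v -> m <= c hs p v.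
  move=> m; exact: (proj2_sig (constructive_indefinite_description _ (Hb m))).
pose f k := \sum_(i < Nb (k.*2.+2)) hs i.
have [h [Hh Hfh]] := Hdom f.
have wok : forall z, p z -> hs (size z) <= size (nu h (c hs p z)./2).
  move=> z pz; rewrite Hnu //.
  set k := (c hs p z)./2.
  have lt : size z < Nb (k.*2.+2).
    rewrite ltnNge; apply/negP => le; have := HNb _ z pz le.
    have := odd_double_half (c hs p z); rewrite -/k.
    have := leq_b1 (odd (c hs p z)). lia.
  apply: leq_trans (ltnW (Hfh k)).
  by rewrite /f (bigD1 (Ordinal lt)) //= leq_addr.
exists (q hs p (nu h)), h; split.
  split; first exact: PTq.
  by move=> e [].
split => // k r [PTr rq].
exists r; split; first by split.
move=> g bg; apply: (q_branch Pp wok) => n; apply: rq; exact: bg n.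
Qed.
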